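(* Let $0\le\gamma\le D^*$ and $k\in\mathbb Z^+$. Let $(E_1,E_2)\in(\mathcal R_{FD}\cup\mathcal B(\gamma))\cap(\gamma+k\mathcal R_{FD})$, where $\gamma+k\mathcal R_{FD}=\{(\gamma+ka,\gamma+kb):(a,b)\in\mathcal R_{FD}\}$. Then for every $\delta>0$ there exist real thresholds $\beta_1\le\alpha_1$ and $\alpha$, not depending on $n$, such that for all sufficiently large $n$ the two-phase test with parameters $(n,k,\alpha_1,\beta_1,\alpha)$ satisfies: - $\tau\le(k+1)n$; - $\mathsf P_i(\tau>n)\le e^{-\gamma n}$ for $i=1,2$; - $\mathsf P_1(d=2)\le e^{-(E_1-\delta)n}$; - $\mathsf P_2(d=1)\le e^{-(E_2-\delta)n}$. In particular, two-phase tests achieve every pair in $\mathcal R_\gamma\cap(\gamma+k\mathcal R_{FD})$.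
   Context: Standing assumptions: $\mathcal X$ is a finite set and $\mathsf P_1,\mathsf P_2$ are two distinct probability mass functions on $\mathcal X$, both with full support. Under hypothesis $H_i$ the observations $X_1,X_2,\dots$ are i.i.d. with law $\mathsf P_i$, and $\mathsf P_i(\cdot)$ denotes probability under $H_i$. $D(P\|Q)=\sum_{x}P(x)\log\frac{P(x)}{Q(x)}$. Tilted distributions: $\mathsf P^{(\lambda)}(x)=\frac{\mathsf P_1^{1-\lambda}(x)\mathsf P_2^{\lambda}(x)}{\sum_{a}\mathsf P_1^{1-\lambda}(a)\mathsf P_2^{\lambda}(a)}$ for $\lambda\in[0,1]$. Chernoff exponent: $\lambda^*\in[0,1]$ satisfies $D(\mathsf P^{(\lambda^* )}\|\mathsf P_1)=D(\mathsf P^{(\lambda^* )}\|\mathsf P_2)$, and $D^*=D(\mathsf P^{(\lambda^* )}\|\mathsf P_1)$. Regions: - $\mathcal R_{FD}=\{(E_1,E_2)\in\mathbb R^2:\exists\lambda\in[0,1],\ E_i\le D(\mathsf P^{(\lambda)}\|\mathsf P_i),\ i=1,2\}$. - $E_1(\gamma)=\max\{D(\mathsf P^{(\lambda)}\|\mathsf P_1):\lambda\in[0,1],\ D(\mathsf P^{(\lambda)}\|\mathsf P_2)\ge\gamma\}$. - $E_2(\gamma)=\max\{D(\mathsf P^{(\lambda)}\|\mathsf P_2):\lambda\in[0,1],\ D(\mathsf P^{(\lambda)}\|\mathsf P_1)\ge\gamma\}$. - $\mathcal B(\gamma)=\{(E_1,E_2):E_1\le E_1(\gamma),\ E_2\le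 E_2(\gamma)\}$. - $\mathcal R_\gamma$ is the $\gamma$-almost-fixed-length region: $(E_1,E_2)\in\mathcal R_\gamma$ if for every $\delta>0$ there exist $l\in\mathbb Z^+$, $C>0$, $n_0$, and for every $n\ge n_0$ a test $(\tau_n,d_n)$ ($\tau_n$ a stopping time for the natural filtration of $X_1,X_2,\dots$, $d_n\in\{1,2\}$ a function of $X_1,\dots,X_{\tau_n}$) with $\tau_n\le Cn^l$, $\mathsf P_i(\tau_n>n)\le e^{-\gamma n}$ ($i=1,2$), $\mathsf P_1(d_n=2)\le e^{-(E_1-\delta)n}$ and $\mathsf P_2(d_n=1)\le e^{-(E_2-\delta)n}$. Two-phase test: for $n,k\in\mathbb Z^+$ and reals $\beta_1\le\alpha_1$ and $\alpha$, let $S_n=\frac1n\sum_{j=1}^n\log\frac{\mathsf P_1(X_j)}{\mathsf P_2(X_j)}$ and $T_n=\frac1{kn}\sum_{j=n+1}^{(k+1)n}\log\frac{\mathsf P_1(X_j)}{\mathsf P_2(X_j)}$. - Phase I: if $S_n\ge\alpha_1$, set $\tau=n$ and $d=1$; otherwise, if $S_n\le\beta_1$, set $\tau=n$ and $d=2$; otherwise set $\tau=(k+1)n$. - Phase II (when $\tau=(k+1)n$): $d=1$ if $T_n\ge\alpha$ and $d=2$ if $T_n<\alpha$. *)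

(* Defs.v *)
From Stdlib Require Import Reals Lra List.
Import ListNotations.
Open Scope R_scope.

(* The finite alphabet X is {0, ..., m-1} (m : nat); a pmf on X is a function
   P : nat -> R whose values outside {0..m-1} are irrelevant. *)

Definition sumX (m : nat) (f : nat -> R) : R :=
  fold_right Rplus 0 (map f (seq 0 m)).

Definition is_pmf_full (m : nat) (P : nat -> R) : Prop :=
  (forall x, (x < m)%nat -> 0 < P x) /\ sumX m P = 1.

Definition KL (m : nat) (P Q : nat -> R) : R :=
  sumX m (fun x => P x * ln (P x / Q x)).

Definition tilt (m : nat) (P1 P2 : nat -> R) (l : R) : nat -> R :=
  fun x => Rpower (P1 x) (1 - l) * Rpower (P2 x) l /
           sumX m (fun a => Rpower (P1 a) (1 - l) * Rpower (P2 a) l).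

Definition R_FD (m : nat) (P1 P2 : nat -> R) (E1 E2 : R) : Prop :=
  exists l, 0 <= l <= 1 /\
    E1 <= KL m (tilt m P1 P2 l) P1 /\ E2 <= KL m (tilt m P1 P2 l) P2.

Definition is_max (S : R -> Prop) (v : R) : Prop :=
  S v /\ forall w, S w -> w <= v.

(* E_1(gamma) is the max of this set, E_2(gamma) the max of the next one *)
Definition E1set (m : nat) (P1 P2 : nat -> R) (g : R) : R -> Prop :=
  fun v => exists l, 0 <= l <= 1 /\ KL m (tilt m P1 P2 l) P2 >= g /\
                     v = KL m (tilt m P1 P2 l) P1.
Definition E2set (m : nat) (P1 P2 : nat -> R) (g : R) : R -> Prop :=
  fun v => exists l, 0 <= l <= 1 /\ KL m (tilt m P1 P2 l) P1 >= g /\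
                     v = KL m (tilt m P1 P2 l) P2.

Definition B_region (m : nat) (P1 P2 : nat -> R) (g E1 E2 : R) : Prop :=
  exists e1 e2, is_max (E1set m P1 P2 g) e1 /\ is_max (E2set m P1 P2 g) e2 /\
    E1 <= e1 /\ E2 <= e2.

(* all words of length N over {0..m-1}; a word [x1; ...; xN] lists X_1..X_N *)
Fixpoint words (m N : nat) : list (list nat) :=
  match N with
  | O => [nil]
  | S N' => concat (map (fun a => map (cons a) (words m N')) (seq 0 m))
  end.

Definition prodP (P : nat -> R) (w : list nat) : R :=
  fold_right Rmult 1 (map P w).

Definition prob (m : nat) (P : nat -> R) (N : nat) (E : list nat -> bool) : R :=
  fold_right Rplus 0
    (map (fun w => if E w then prodP P w else 0) (words m N)).

Definition llr (P1 P2 : nat -> R) (x : nat) : R := ln (P1 x / P2 x).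

Definition sumL (f : nat -> R) (w : list nat) : R :=
  fold_right Rplus 0 (map f w).

Definition S_stat (P1 P2 : nat -> R) (n : nat) (w : list nat) : R :=
  sumL (llr P1 P2) (firstn n w) / INR n.

Definition T_stat (P1 P2 : nat -> R) (n k : nat) (w : list nat) : R :=
  sumL (llr P1 P2) (skipn n (firstn ((k + 1) * n) w)) / (INR k * INR n).

(* the two-phase test: returns (tau, d) as a function of X_1..X_{(k+1)n} *)
Definition two_phase (P1 P2 : nat -> R) (n k : nat) (alpha1 beta1 alpha : R)
  (w : list nat) : nat * nat :=
  let s := S_stat P1 P2 n w in
  if Rle_dec alpha1 s then (n, 1%nat)
  else if Rle_dec s beta1 then (n, 2%nat)
  else ((k + 1) * n, if Rle_dec alpha (T_stat P1 P2 n k w) then 1%nat else 2%nat)%nat.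

(* Main.v *)
Require Import Defs.
From Stdlib Require Import Reals List Lra Lia.
Import ListNotations.
Open Scope R_scope.

Definition lsum (l : list R) : R := fold_right Rplus 0 l.

Lemma lsum_map_le {A} (f g : A -> R) (l : list A) :
  (forall x, In x l -> f x <= g x) -> lsum (map f l) <= lsum (map g l).
Proof.
  induction l as [|a l IH]; simpl; intros H; [lra|].
  assert (f a <= g a) by (apply H; auto).
  assert (lsum (map f l) <= lsum (map g l)) by (apply IH; auto).
  unfold lsum in *; simpl; lra.
Qed.

Lemma lsum_map_ext {A} (f g : A -> R) (l : list A) :
  (forall x, In x l -> f x = g x) -> lsum (map f l) = lsum (map g l).
Proof.
  intros H; f_equal; apply map_ext_in; auto.
Qed.

Lemma lsum_map_plus {A} (f g : A -> R) (l : list A) :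
  lsum (map (fun x => f x + g x) l) = lsum (map f l) + lsum (map g l).
Proof. induction l; unfold lsum in *; simpl; [lra|]. rewrite IHl; lra. Qed.

Lemma lsum_map_scal {A} (c : R) (f : A -> R) (l : list A) :
  lsum (map (fun x => c * f x) l) = c * lsum (map f l).
Proof. induction l; unfold lsum in *; simpl; [lra|]. rewrite IHl; lra. Qed.

Lemma lsum_app l1 l2 : lsum (l1 ++ l2) = lsum l1 + lsum l2.
Proof. induction l1; unfold lsum in *; simpl; [lra|]. rewrite IHl1; lra. Qed.

Lemma lsum_concat {A} (F : A -> R) (L : list (list A)) :
  lsum (map F (concat L)) = lsum (map (fun l => lsum (map F l)) L).
Proof.
  induction L; simpl; [reflexivity|].
  rewrite map_app, lsum_app, IHL. reflexivity.
Qed.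

Lemma sumX_lsum m f : sumX m f = lsum (map f (seq 0 m)).
Proof. reflexivity. Qed.

Definition wsum (m N : nat) (F : list nat -> R) : R := lsum (map F (words m N)).

Lemma words_in m N w : In w (words m N) -> length w = N /\ Forall (fun x => (x < m)%nat) w.
Proof.
  revert w; induction N as [|N IH]; simpl; intros w H.
  - destruct H as [H|[]]; subst; simpl; auto.
  - apply in_concat in H. destruct H as [l [Hl Hw]].
    apply in_map_iff in Hl. destruct Hl as [a [Ha Hin]]. subst l.
    apply in_map_iff in Hw. destruct Hw as [w' [Hw' Hin']]. subst w.
    apply in_seq in Hin. destruct (IH w' Hin') as [H1 H2].
    simpl; split; [lia|]. constructor; [lia|auto].
Qed.

Lemma wsum_cons m N F :
  wsum m (S N) F = sumX m (fun a => wsum m N (fun w => F (a :: w))).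
Proof.
  unfold wsum; simpl. rewrite lsum_concat, map_map.
  rewrite sumX_lsum. f_equal. apply map_ext. intro a. rewrite map_map. reflexivity.
Qed.

Lemma wsum_ext m N F G : (forall w, In w (words m N) -> F w = G w) -> wsum m N F = wsum m N G.
Proof. intros; apply lsum_map_ext; auto. Qed.

Lemma wsum_le m N F G : (forall w, In w (words m N) -> F w <= G w) -> wsum m N F <= wsum m N G.
Proof. intros; apply lsum_map_le; auto. Qed.

Lemma wsum_plus m N F G : wsum m N (fun w => F w + G w) = wsum m N F + wsum m N G.
Proof. apply lsum_map_plus. Qed.

Lemma wsum_scal m N c F : wsum m N (fun w => c * F w) = c * wsum m N F.
Proof. apply lsum_map_scal. Qed.

Lemma sumX_ext m f g : (forall x, (x < m)%nat -> f x = g x) -> sumX m f = sumX m g.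
Proof.
  intros H. rewrite !sumX_lsum. apply lsum_map_ext. intros x Hx. apply in_seq in Hx. apply H; lia.
Qed.

Lemma sumX_scal_r m f c : sumX m (fun x => f x * c) = sumX m f * c.
Proof.
  rewrite !sumX_lsum. rewrite (lsum_map_ext _ (fun x => c * f x)) by (intros; ring).
  rewrite lsum_map_scal; ring.
Qed.

Lemma sumX_plus m f g : sumX m (fun x => f x + g x) = sumX m f + sumX m g.
Proof. apply lsum_map_plus. Qed.

Lemma sumX_scal m c f : sumX m (fun x => c * f x) = c * sumX m f.
Proof. apply lsum_map_scal. Qed.

Lemma sumX_pos m f : (0 < m)%nat -> (forall x, (x < m)%nat -> 0 < f x) -> 0 < sumX m f.
Proof.
  intros Hm H. rewrite sumX_lsum.
  assert (Hg: forall l, (forall x, In x l -> (x < m)%nat) -> 0 <= lsum (map f l)).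
  { induction l; simpl; intros; unfold lsum in *; simpl; [lra|].
    assert (0 < f a) by (apply H, H0; auto). assert (0 <= fold_right Rplus 0 (map f l)) by (apply IHl; auto). lra. }
  destruct m; [lia|]. simpl. unfold lsum; simpl.
  assert (0 < f 0%nat) by (apply H; lia).
  assert (0 <= lsum (map f (seq 1 m))).
  { apply Hg. intros x Hx. apply in_seq in Hx. lia. }
  unfold lsum in *; lra.
Qed.

Lemma wsum_split m n j F :
  wsum m (n + j) F = wsum m n (fun u => wsum m j (fun v => F (u ++ v))).
Proof.
  revert F; induction n as [|n IH]; intros F.
  - unfold wsum at 2; simpl. unfold lsum; simpl. rewrite Rplus_0_r. reflexivity.
  - change (S n + j)%nat with (S (n + j)). rewrite !wsum_cons.
    apply sumX_ext. intros a _. rewrite IH. reflexivity.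
Qed.

Definition prodL (f : nat -> R) (w : list nat) : R := fold_right Rmult 1 (map f w).

Lemma wsum_prod m N f : wsum m N (prodL f) = (sumX m f) ^ N.
Proof.
  induction N as [|N IH].
  - unfold wsum, lsum; simpl. unfold prodL; simpl. ring.
  - rewrite wsum_cons. simpl pow.
    rewrite (sumX_ext _ _ (fun a => f a * (sumX m f ^ N))).
    + rewrite sumX_scal_r. ring.
    + intros a _. unfold prodL; simpl. rewrite wsum_scal. rewrite <- IH. reflexivity.
Qed.

Lemma prodP_app P u v : prodP P (u ++ v) = prodP P u * prodP P v.
Proof. induction u; unfold prodP in *; simpl; [ring|]. rewrite IHu; ring. Qed.

Lemma sumL_app L u v : sumL L (u ++ v) = sumL L u + sumL L v.
Proof. induction u; unfold sumL in *; simpl; [ring|]. rewrite IHu; ring. Qed.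

Lemma prod_exp P L c u :
  prodP P u * exp (c * sumL L u) = prodL (fun x => P x * exp (c * L x)) u.
Proof.
  induction u; unfold prodP, sumL, prodL in *; simpl.
  - rewrite Rmult_0_r, exp_0; ring.
  - rewrite <- IHu. rewrite Rmult_plus_distr_l, exp_plus. ring.
Qed.

Lemma wsum_block m P L c t n :
  wsum m n (fun u => prodP P u * exp (c * (sumL L u - t))) =
  exp (- c * t) * (sumX m (fun x => P x * exp (c * L x))) ^ n.
Proof.
  rewrite <- wsum_prod.
  rewrite <- wsum_scal. apply wsum_ext. intros u _.
  rewrite <- prod_exp.
  replace (c * (sumL L u - t)) with (- c * t + c * sumL L u) by ring.
  rewrite exp_plus. ring.
Qed.

Lemma chernoff_eq m P L c1 t1 c2 t2 n j :
  wsum m (n + j) (fun w => prodP P w *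
     exp (c1 * (sumL L (firstn n w) - t1) + c2 * (sumL L (skipn n w) - t2))) =
  (exp (- c1 * t1) * (sumX m (fun x => P x * exp (c1 * L x))) ^ n) *
  (exp (- c2 * t2) * (sumX m (fun x => P x * exp (c2 * L x))) ^ j).
Proof.
  rewrite wsum_split. rewrite <- (wsum_block m P L c1 t1 n), <- (wsum_block m P L c2 t2 j). rewrite Rmult_comm, <- wsum_scal.
  apply wsum_ext. intros u Hu. apply words_in in Hu. destruct Hu as [Hl _].
  rewrite Rmult_comm, <- wsum_scal. apply wsum_ext. intros v _.
  rewrite firstn_app, skipn_app, firstn_all2, skipn_all2 by lia.
  rewrite Hl, Nat.sub_diag, firstn_0, skipn_0, app_nil_r. simpl.
  rewrite prodP_app, exp_plus. ring.
Qed.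

Lemma prodP_nonneg m P w : (forall x, (x < m)%nat -> 0 < P x) ->
  Forall (fun x => (x < m)%nat) w -> 0 <= prodP P w.
Proof.
  intros HP H; induction H; unfold prodP in *; simpl; [lra|].
  apply Rmult_le_pos; auto. left; auto.
Qed.

Lemma prob_GB m P N E G :
  (forall x, (x < m)%nat -> 0 < P x) -> (forall w, 0 <= G w) ->
  (forall w, In w (words m N) -> E w = true -> 1 <= G w) ->
  prob m P N E <= wsum m N (fun w => prodP P w * G w).
Proof.
  intros HP HG H. unfold prob. apply wsum_le. intros w Hw.
  pose proof (words_in _ _ _ Hw) as [_ Hf].
  pose proof (prodP_nonneg m P w HP Hf).
  specialize (HG w). specialize (H w Hw).
  destruct (E w).
  - specialize (H eq_refl). nra.
  - nra.
Qed.

Section Tilt.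
Variables (m : nat) (P1 P2 : nat -> R).
Hypothesis HP1 : forall x, (x < m)%nat -> 0 < P1 x.
Hypothesis HP2 : forall x, (x < m)%nat -> 0 < P2 x.
Hypothesis Hm : (0 < m)%nat.

Definition Zf l := sumX m (fun a => Rpower (P1 a) (1 - l) * Rpower (P2 a) l).
Definition Af l := sumX m (fun x => tilt m P1 P2 l x * llr P1 P2 x).

Lemma llr_eq x : (x < m)%nat -> llr P1 P2 x = ln (P1 x) - ln (P2 x).
Proof.
  intros Hx. unfold llr.
  replace (P1 x / P2 x) with (exp (ln (P1 x) - ln (P2 x))).
  - apply ln_exp.
  - unfold Rminus; rewrite exp_plus, exp_Ropp, !exp_ln; auto.
Qed.

Lemma g_P1 l x : (x < m)%nat ->
  Rpower (P1 x) (1 - l) * Rpower (P2 x) l = P1 x * exp (- l * llr P1 P2 x).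
Proof.
  intros Hx. rewrite llr_eq by auto. unfold Rpower.
  rewrite <- (exp_ln (P1 x)) at 2 by auto. rewrite <- !exp_plus. f_equal. ring.
Qed.

Lemma g_P2 l x : (x < m)%nat ->
  Rpower (P1 x) (1 - l) * Rpower (P2 x) l = P2 x * exp ((1 - l) * llr P1 P2 x).
Proof.
  intros Hx. rewrite llr_eq by auto. unfold Rpower.
  rewrite <- (exp_ln (P2 x)) at 2 by auto. rewrite <- !exp_plus. f_equal. ring.
Qed.

Lemma Z_pos l : 0 < Zf l.
Proof. apply sumX_pos; auto. intros; unfold Rpower. apply Rmult_lt_0_compat; apply exp_pos. Qed.

Lemma M1_eq l : sumX m (fun x => P1 x * exp (- l * llr P1 P2 x)) = Zf l.
Proof. unfold Zf. apply sumX_ext. intros; rewrite g_P1; auto. Qed.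

Lemma M2_eq l : sumX m (fun x => P2 x * exp ((1 - l) * llr P1 P2 x)) = Zf l.
Proof. unfold Zf. apply sumX_ext. intros; rewrite g_P2; auto. Qed.

Lemma M0_eq P : sumX m P = 1 -> sumX m (fun x => P x * exp (0 * llr P1 P2 x)) = 1.
Proof.
  intros H. rewrite <- H. apply sumX_ext. intros. rewrite Rmult_0_l, exp_0; ring.
Qed.

Lemma sum_tilt l : sumX m (tilt m P1 P2 l) = 1.
Proof.
  unfold tilt. rewrite (sumX_ext _ _ (fun x => (Rpower (P1 x) (1 - l) * Rpower (P2 x) l) * / Zf l)).
  - rewrite sumX_scal_r. fold (Zf l). field. apply Rgt_not_eq, Z_pos.
  - intros; unfold Rdiv; reflexivity.
Qed.

Lemma K1_eq l : KL m (tilt m P1 P2 l) P1 = - l * Af l - ln (Zf l).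
Proof.
  pose proof (Z_pos l) as HZ.
  unfold KL, Af.
  rewrite (sumX_ext _ _ (fun x => (- l) * (tilt m P1 P2 l x * llr P1 P2 x) + (- ln (Zf l)) * tilt m P1 P2 l x)).
  - rewrite sumX_plus, !sumX_scal, sum_tilt. ring.
  - intros x Hx. unfold tilt. fold (Zf l). rewrite g_P1 by auto.
    replace (P1 x * exp (- l * llr P1 P2 x) / Zf l / P1 x) with (exp (- l * llr P1 P2 x + - ln (Zf l))).
    + rewrite ln_exp. ring.
    + rewrite exp_plus, exp_Ropp, exp_ln by auto. field. pose proof (HP1 x Hx). split; lra.
Qed.

Lemma K2_eq l : KL m (tilt m P1 P2 l) P2 = (1 - l) * Af l - ln (Zf l).
Proof.
  pose proof (Z_pos l) as HZ.
  unfold KL, Af.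
  rewrite (sumX_ext _ _ (fun x => (1 - l) * (tilt m P1 P2 l x * llr P1 P2 x) + (- ln (Zf l)) * tilt m P1 P2 l x)).
  - rewrite sumX_plus, !sumX_scal, sum_tilt. ring.
  - intros x Hx. unfold tilt. fold (Zf l). rewrite (g_P2 l x) by auto.
    replace (P2 x * exp ((1 - l) * llr P1 P2 x) / Zf l / P2 x) with (exp ((1 - l) * llr P1 P2 x + - ln (Zf l))).
    + rewrite ln_exp. ring.
    + rewrite exp_plus, exp_Ropp, exp_ln by auto. field. pose proof (HP2 x Hx). split; lra.
Qed.

Lemma Zpow n l : Zf l ^ n = exp (INR n * ln (Zf l)).
Proof. rewrite <- Rpower_pow by apply Z_pos. reflexivity. Qed.

Lemma block1 n l t : t = INR n * Af l ->
  exp (- (- l) * t) * Zf l ^ n = exp (- INR n * KL m (tilt m P1 P2 l) P1).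
Proof. intros ->. rewrite Zpow, K1_eq, <- exp_plus. f_equal. ring. Qed.

Lemma block2 n l t : t = INR n * Af l ->
  exp (- (1 - l) * t) * Zf l ^ n = exp (- INR n * KL m (tilt m P1 P2 l) P2).
Proof. intros ->. rewrite Zpow, K2_eq, <- exp_plus. f_equal. ring. Qed.

End Tilt.

Lemma exp_le a b : a <= b -> exp a <= exp b.
Proof. intros [H|H]; [left; apply exp_increasing; auto | subst; lra]. Qed.

Lemma one_le_exp x : 0 <= x -> 1 <= exp x.
Proof. intros; pose proof (exp_ineq1_le x); lra. Qed.

Lemma wsum_plus' m N (p g1 g2 : list nat -> R) :
  wsum m N (fun w => p w * (g1 w + g2 w)) = wsum m N (fun w => p w * g1 w) + wsum m N (fun w => p w * g2 w).
Proof. rewrite <- wsum_plus. apply wsum_ext; intros; ring. Qed.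

Section Bounds.
Variables (m : nat) (P1 P2 : nat -> R).
Hypothesis HP1 : forall x, (x < m)%nat -> 0 < P1 x.
Hypothesis HP2 : forall x, (x < m)%nat -> 0 < P2 x.
Hypothesis HS1 : sumX m P1 = 1.
Hypothesis HS2 : sumX m P2 = 1.
Hypothesis Hm : (0 < m)%nat.

Notation L := (llr P1 P2).
Notation K1 l := (KL m (tilt m P1 P2 l) P1).
Notation K2 l := (KL m (tilt m P1 P2 l) P2).
Notation A l := (Af m P1 P2 l).

Lemma bound1 l n j E : 0 <= l ->
  (forall w, In w (words m (n + j)) -> E w = true -> sumL L (firstn n w) <= INR n * A l) ->
  prob m P1 (n + j) E <= exp (- INR n * K1 l).
Proof.
  intros Hl H.
  eapply Rle_trans.
  - apply (prob_GB m P1 (n + j) E (fun w => exp (- l * (sumL L (firstn n w) - INR n * A l)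
                     + 0 * (sumL L (skipn n w) - 0)))); auto.
    + intros; left; apply exp_pos.
    + intros w Hw HE. apply one_le_exp. specialize (H w Hw HE). nra.
  - rewrite chernoff_eq. rewrite M1_eq, M0_eq by auto.
    rewrite (block1 m P1 P2 HP1 HP2 Hm n l) by reflexivity.
    rewrite pow1, !Rmult_0_r, ?Ropp_0, exp_0. lra.
Qed.

Lemma bound2 l n j E : l <= 1 ->
  (forall w, In w (words m (n + j)) -> E w = true -> INR n * A l <= sumL L (firstn n w)) ->
  prob m P2 (n + j) E <= exp (- INR n * K2 l).
Proof.
  intros Hl H.
  eapply Rle_trans.
  - apply (prob_GB m P2 (n + j) E (fun w => exp ((1 - l) * (sumL L (firstn n w) - INR n * A l)
                     + 0 * (sumL L (skipn n w) - 0)))); auto.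
    + intros; left; apply exp_pos.
    + intros w Hw HE. apply one_le_exp. specialize (H w Hw HE). nra.
  - rewrite chernoff_eq. rewrite M2_eq, M0_eq by auto.
    rewrite (block2 m P1 P2 HP1 HP2 Hm n l) by reflexivity.
    rewrite pow1, !Rmult_0_r, ?Ropp_0, exp_0. lra.
Qed.

Lemma bound1' la lb lc n j E : 0 <= la -> 0 <= lb -> 0 <= lc ->
  (forall w, In w (words m (n + j)) -> E w = true ->
     sumL L (firstn n w) <= INR n * A la \/
     (sumL L (firstn n w) <= INR n * A lb /\ sumL L (skipn n w) <= INR j * A lc)) ->
  prob m P1 (n + j) E <= exp (- INR n * K1 la) + exp (- INR n * K1 lb) * exp (- INR j * K1 lc).
Proof.
  intros Ha Hb Hc H.
  eapply Rle_trans.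
  - apply (prob_GB m P1 (n + j) E (fun w => exp (- la * (sumL L (firstn n w) - INR n * A la)
                     + 0 * (sumL L (skipn n w) - 0)) +
              exp (- lb * (sumL L (firstn n w) - INR n * A lb)
                     + - lc * (sumL L (skipn n w) - INR j * A lc)))); auto.
    + intros; pose proof (exp_pos (- la * (sumL L (firstn n w) - INR n * A la)
                     + 0 * (sumL L (skipn n w) - 0))); pose proof (exp_pos (- lb * (sumL L (firstn n w) - INR n * A lb)
                     + - lc * (sumL L (skipn n w) - INR j * A lc))); lra.
    + intros w Hw HE. specialize (H w Hw HE).
      match goal with |- 1 <= exp ?a + exp ?b => pose proof (exp_pos a); pose proof (exp_pos b) end.
      destruct H as [H|[Hu Hv]].
      * assert (1 <= exp (- la * (sumL L (firstn n w) - INR n * A la)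
                     + 0 * (sumL L (skipn n w) - 0))) by (apply one_le_exp; nra). lra.
      * assert (1 <= exp (- lb * (sumL L (firstn n w) - INR n * A lb)
                     + - lc * (sumL L (skipn n w) - INR j * A lc))) by (apply one_le_exp; nra). lra.
  - rewrite wsum_plus'.
    rewrite !chernoff_eq. rewrite !M1_eq, M0_eq by auto.
    rewrite !(block1 m P1 P2 HP1 HP2 Hm _ _ _ eq_refl).
    rewrite pow1, !Rmult_0_r, ?Ropp_0, exp_0. lra.
Qed.

Lemma bound2' la lb lc n j E : la <= 1 -> lb <= 1 -> lc <= 1 ->
  (forall w, In w (words m (n + j)) -> E w = true ->
     INR n * A la <= sumL L (firstn n w) \/
     (INR n * A lb <= sumL L (firstn n w) /\ INR j * A lc <= sumL L (skipn n w))) ->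
  prob m P2 (n + j) E <= exp (- INR n * K2 la) + exp (- INR n * K2 lb) * exp (- INR j * K2 lc).
Proof.
  intros Ha Hb Hc H.
  eapply Rle_trans.
  - apply (prob_GB m P2 (n + j) E (fun w => exp ((1 - la) * (sumL L (firstn n w) - INR n * A la)
                     + 0 * (sumL L (skipn n w) - 0)) +
              exp ((1 - lb) * (sumL L (firstn n w) - INR n * A lb)
                     + (1 - lc) * (sumL L (skipn n w) - INR j * A lc)))); auto.
    + intros; pose proof (exp_pos ((1 - la) * (sumL L (firstn n w) - INR n * A la)
                     + 0 * (sumL L (skipn n w) - 0))); pose proof (exp_pos ((1 - lb) * (sumL L (firstn n w) - INR n * A lb)
                     + (1 - lc) * (sumL L (skipn n w) - INR j * A lc))); lra.
    + intros w Hw HE. specialize (H w Hw HE).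
      match goal with |- 1 <= exp ?a + exp ?b => pose proof (exp_pos a); pose proof (exp_pos b) end.
      destruct H as [H|[Hu Hv]].
      * assert (1 <= exp ((1 - la) * (sumL L (firstn n w) - INR n * A la)
                     + 0 * (sumL L (skipn n w) - 0))) by (apply one_le_exp; nra). lra.
      * assert (1 <= exp ((1 - lb) * (sumL L (firstn n w) - INR n * A lb)
                     + (1 - lc) * (sumL L (skipn n w) - INR j * A lc))) by (apply one_le_exp; nra). lra.
  - rewrite wsum_plus'.
    rewrite !chernoff_eq. rewrite !M2_eq, M0_eq by auto.
    rewrite !(block2 m P1 P2 HP1 HP2 Hm _ _ _ eq_refl).
    rewrite pow1, !Rmult_0_r, ?Ropp_0, exp_0. lra.
Qed.

End Bounds.

Lemma div_le1 x d b : 0 < d -> x / d <= b -> x <= d * b.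
Proof. intros Hd H. replace x with (x / d * d) by (field; lra). nra. Qed.
Lemma div_le2 x d a : 0 < d -> ~ a <= x / d -> x <= d * a.
Proof. intros Hd H. apply Rnot_le_lt in H. replace x with (x / d * d) by (field; lra). nra. Qed.
Lemma div_le3 x d a : 0 < d -> a <= x / d -> d * a <= x.
Proof. intros Hd H. replace x with (x / d * d) by (field; lra). nra. Qed.
Lemma div_le4 x d b : 0 < d -> ~ x / d <= b -> d * b <= x.
Proof. intros Hd H. apply Rnot_le_lt in H. replace x with (x / d * d) by (field; lra). nra. Qed.

Lemma T_eq P1 P2 n k w : length w = (n + k * n)%nat ->
  T_stat P1 P2 n k w = sumL (llr P1 P2) (skipn n w) / INR (k * n).
Proof.
  intros H. unfold T_stat. rewrite firstn_all2 by (rewrite H; lia). rewrite mult_INR. reflexivity.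
Qed.

Lemma prob_zero m P N E : (forall x, (x < m)%nat -> 0 < P x) ->
  (forall w, In w (words m N) -> E w = true -> False) -> forall r, prob m P N E <= exp r.
Proof.
  intros HP H r. eapply Rle_trans.
  - apply (prob_GB m P N E (fun _ => 0)); auto.
    + intros; lra.
    + intros w Hw HE; exfalso; eauto.
  - rewrite (wsum_ext _ _ _ (fun w => 0 * prodP P w)) by (intros; ring).
    rewrite wsum_scal, Rmult_0_l. left; apply exp_pos.
Qed.

Lemma Rmult_le_0_l_aux a b : 0 <= a -> b <= 0 -> a * b <= 0.
Proof. intros; nra. Qed.

Lemma fin2 Ka Kb Kc E g d n k : E <= Ka -> g <= Kb -> E <= g + INR k * Kc ->
  2 <= exp (d * INR n) ->
  exp (- INR n * Ka) + exp (- INR n * Kb) * exp (- INR (k * n) * Kc) <= exp (- (E - d) * INR n).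
Proof.
  intros H1 H2 H3 H4.
  pose proof (pos_INR n) as Hn. pose proof (pos_INR k) as Hk.
  rewrite mult_INR, <- exp_plus.
  assert (h1 : exp (- INR n * Ka) <= exp (- INR n * E)) by (apply exp_le; nra).
  assert (h2 : exp (- INR n * Kb + - (INR k * INR n) * Kc) <= exp (- INR n * E)).
  { apply exp_le.
    assert (INR n * (E - g - INR k * Kc) <= 0) by (apply Rmult_le_0_l_aux; lra).
    assert (INR n * (g - Kb) <= 0) by (apply Rmult_le_0_l_aux; lra). nra. }
  replace (- (E - d) * INR n) with (- INR n * E + d * INR n) by ring.
  rewrite (exp_plus (- INR n * E)). pose proof (exp_pos (- INR n * E)).
  assert (0 <= (exp (d * INR n) - 2) * exp (- INR n * E)) by (apply Rmult_le_pos; lra). nra.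
Qed.

Section Core.
Variables (m : nat) (P1 P2 : nat -> R).
Hypothesis HP1 : forall x, (x < m)%nat -> 0 < P1 x.
Hypothesis HP2 : forall x, (x < m)%nat -> 0 < P2 x.
Hypothesis HS1 : sumX m P1 = 1.
Hypothesis HS2 : sumX m P2 = 1.
Hypothesis Hm : (0 < m)%nat.

Notation L := (llr P1 P2).
Notation K1 l := (KL m (tilt m P1 P2 l) P1).
Notation K2 l := (KL m (tilt m P1 P2 l) P2).
Notation A l := (Af m P1 P2 l).

Lemma coreA l1 l2 c E1 E2 g delta n k :
  0 <= l1 <= 1 -> 0 <= l2 <= 1 -> c <= A l1 -> A l2 <= c ->
  E1 <= K1 l1 -> E2 <= K2 l2 -> delta > 0 -> (1 <= n)%nat ->
  let test := two_phase P1 P2 n k c c 0 in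
    prob m P1 (n + k * n) (fun w => Nat.ltb n (fst (test w))) <= exp (- g * INR n) /\
    prob m P2 (n + k * n) (fun w => Nat.ltb n (fst (test w))) <= exp (- g * INR n) /\
    prob m P1 (n + k * n) (fun w => Nat.eqb (snd (test w)) 2) <= exp (- (E1 - delta) * INR n) /\
    prob m P2 (n + k * n) (fun w => Nat.eqb (snd (test w)) 1) <= exp (- (E2 - delta) * INR n).
Proof.
  intros Hl1 Hl2 Hc1 Hc2 HE1 HE2 Hd Hn test.
  assert (Hnp : 0 < INR n) by (apply lt_0_INR; lia).
  split; [|split; [|split]].
  - apply prob_zero; auto. intros w _ HE. unfold test, two_phase in HE. cbv zeta in HE.
    destruct (Rle_dec c (S_stat P1 P2 n w)); [simpl in HE; rewrite Nat.ltb_irrefl in HE; discriminate|].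
    destruct (Rle_dec (S_stat P1 P2 n w) c); [simpl in HE; rewrite Nat.ltb_irrefl in HE; discriminate|].
    lra.
  - apply prob_zero; auto. intros w _ HE. unfold test, two_phase in HE. cbv zeta in HE.
    destruct (Rle_dec c (S_stat P1 P2 n w)); [simpl in HE; rewrite Nat.ltb_irrefl in HE; discriminate|].
    destruct (Rle_dec (S_stat P1 P2 n w) c); [simpl in HE; rewrite Nat.ltb_irrefl in HE; discriminate|].
    lra.
  - eapply Rle_trans; [apply (bound1 m P1 P2 HP1 HP2 HS1 Hm l1 n (k * n)); [lra|]|].
    + intros w _ HE. unfold test, two_phase in HE. cbv zeta in HE.
      destruct (Rle_dec c (S_stat P1 P2 n w)); [simpl in HE; discriminate|].
      apply div_le2 in n0; auto. nra.
    + apply exp_le. nra.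
  - eapply Rle_trans; [apply (bound2 m P1 P2 HP1 HP2 HS2 Hm l2 n (k * n)); [lra|]|].
    + intros w _ HE. unfold test, two_phase in HE. cbv zeta in HE.
      destruct (Rle_dec c (S_stat P1 P2 n w)) as [h|h].
      * apply div_le3 in h; auto. nra.
      * destruct (Rle_dec (S_stat P1 P2 n w) c); simpl in HE; [discriminate|lra].
    + apply exp_le. nra.
Qed.

Lemma coreB l1 l2 l0 E1 E2 g delta n k :
  0 <= l1 <= 1 -> 0 <= l2 <= 1 -> 0 <= l0 <= 1 -> A l1 <= A l2 ->
  g <= K2 l1 -> g <= K1 l2 -> E1 <= K1 l1 -> E2 <= K2 l2 ->
  E1 <= g + INR k * K1 l0 -> E2 <= g + INR k * K2 l0 ->
  2 <= exp (delta * INR n) -> (1 <= n)%nat -> (1 <= k)%nat ->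
  let test := two_phase P1 P2 n k (A l2) (A l1) (A l0) in
    prob m P1 (n + k * n) (fun w => Nat.ltb n (fst (test w))) <= exp (- g * INR n) /\
    prob m P2 (n + k * n) (fun w => Nat.ltb n (fst (test w))) <= exp (- g * INR n) /\
    prob m P1 (n + k * n) (fun w => Nat.eqb (snd (test w)) 2) <= exp (- (E1 - delta) * INR n) /\
    prob m P2 (n + k * n) (fun w => Nat.eqb (snd (test w)) 1) <= exp (- (E2 - delta) * INR n).
Proof.
  intros Hl1 Hl2 Hl0 Hc Hg1 Hg2 HE1 HE2 HF1 HF2 H2 Hn Hk test.
  assert (Hnp : 0 < INR n) by (apply lt_0_INR; lia).
  assert (Hknp : 0 < INR (k * n)) by (apply lt_0_INR; lia).
  split; [|split; [|split]].
  - eapply Rle_trans; [apply (bound1 m P1 P2 HP1 HP2 HS1 Hm l2 n (k * n)); [lra|]|].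
    + intros w _ HE. unfold test, two_phase in HE. cbv zeta in HE.
      destruct (Rle_dec (A l2) (S_stat P1 P2 n w)) as [h|h];
        [simpl in HE; rewrite Nat.ltb_irrefl in HE; discriminate|].
      apply div_le2 in h; auto.
    + apply exp_le. nra.
  - eapply Rle_trans; [apply (bound2 m P1 P2 HP1 HP2 HS2 Hm l1 n (k * n)); [lra|]|].
    + intros w _ HE. unfold test, two_phase in HE. cbv zeta in HE.
      destruct (Rle_dec (A l2) (S_stat P1 P2 n w)) as [h|h];
        [simpl in HE; rewrite Nat.ltb_irrefl in HE; discriminate|].
      destruct (Rle_dec (S_stat P1 P2 n w) (A l1)) as [h'|h'];
        [simpl in HE; rewrite Nat.ltb_irrefl in HE; discriminate|].
      apply div_le4 in h'; auto.
    + apply exp_le. nra.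
  - eapply Rle_trans; [apply (bound1' m P1 P2 HP1 HP2 HS1 Hm l1 l2 l0 n (k * n)); [lra|lra|lra|]|].
    + intros w Hw HE. destruct (words_in _ _ _ Hw) as [Hlen _].
      unfold test, two_phase in HE. cbv zeta in HE.
      destruct (Rle_dec (A l2) (S_stat P1 P2 n w)) as [h|h]; [simpl in HE; discriminate|].
      destruct (Rle_dec (S_stat P1 P2 n w) (A l1)) as [h'|h'].
      * left. apply div_le1 in h'; auto.
      * destruct (Rle_dec (A l0) (T_stat P1 P2 n k w)) as [h''|h'']; [simpl in HE; discriminate|].
        right. rewrite T_eq in h'' by auto. apply div_le2 in h; auto. apply div_le2 in h''; auto.
    + apply fin2 with g; auto.
  - eapply Rle_trans; [apply (bound2' m P1 P2 HP1 HP2 HS2 Hm l2 l1 l0 n (k * n)); [lra|lra|lra|]|].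
    + intros w Hw HE. destruct (words_in _ _ _ Hw) as [Hlen _].
      unfold test, two_phase in HE. cbv zeta in HE.
      destruct (Rle_dec (A l2) (S_stat P1 P2 n w)) as [h|h].
      * left. apply div_le3 in h; auto.
      * destruct (Rle_dec (S_stat P1 P2 n w) (A l1)) as [h'|h']; [simpl in HE; discriminate|].
        destruct (Rle_dec (A l0) (T_stat P1 P2 n k w)) as [h''|h'']; [|simpl in HE; discriminate].
        right. rewrite T_eq in h'' by auto. apply div_le4 in h'; auto. apply div_le3 in h''; auto.
    + apply fin2 with g; auto.
Qed.

End Core.

Theorem proposition1
  (m : nat) (P1 P2 : nat -> R)
  (HP1 : is_pmf_full m P1) (HP2 : is_pmf_full m P2)
  (Hdist : exists x, (x < m)%nat /\ P1 x <> P2 x)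
  (lstar Dstar : R)
  (Hlstar : 0 <= lstar <= 1)
  (Hchern : KL m (tilt m P1 P2 lstar) P1 = KL m (tilt m P1 P2 lstar) P2)
  (HDstar : Dstar = KL m (tilt m P1 P2 lstar) P1)
  (gamma : R) (Hg : 0 <= gamma <= Dstar)
  (k : nat) (Hk : (1 <= k)%nat)
  (E1 E2 : R)
  (HE : R_FD m P1 P2 E1 E2 \/ B_region m P1 P2 gamma E1 E2)
  (HEk : exists a b, R_FD m P1 P2 a b /\
           E1 = gamma + INR k * a /\ E2 = gamma + INR k * b) :
  forall delta, delta > 0 ->
  exists alpha1 beta1 alpha : R, beta1 <= alpha1 /\
  exists n0 : nat, forall n : nat, (n0 <= n)%nat ->
    let N := ((k + 1) * n)%nat in
    let test := two_phase P1 P2 n k alpha1 beta1 alpha in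
    (forall w, (fst (test w) <= N)%nat) /\
    prob m P1 N (fun w => Nat.ltb n (fst (test w))) <= exp (- gamma * INR n) /\
    prob m P2 N (fun w => Nat.ltb n (fst (test w))) <= exp (- gamma * INR n) /\
    prob m P1 N (fun w => Nat.eqb (snd (test w)) 2) <= exp (- (E1 - delta) * INR n) /\
    prob m P2 N (fun w => Nat.eqb (snd (test w)) 1) <= exp (- (E2 - delta) * INR n).
Proof.
  intros delta Hd.
  destruct HP1 as [Hp1 Hs1]. destruct HP2 as [Hp2 Hs2].
  assert (Hm : (0 < m)%nat) by (destruct Hdist as [x [Hx _]]; lia).
  assert (Hfst : forall a1 b1 a n w, (fst (two_phase P1 P2 n k a1 b1 a w) <= (k + 1) * n)%nat).
  { intros. unfold two_phase. cbv zeta.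
    destruct (Rle_dec _ _); simpl; [lia|]. destruct (Rle_dec _ _); simpl; lia. }
  destruct (INR_unbounded (/ delta)) as [N0 HN0].
  assert (Hbig : forall n, (N0 <= n)%nat -> 2 <= exp (delta * INR n)).
  { intros n Hn. apply le_INR in Hn.
    assert (1 <= delta * INR n).
    { replace 1 with (delta * / delta) by (field; lra). apply Rmult_le_compat_l; lra. }
    pose proof (exp_ineq1_le (delta * INR n)). lra. }
  destruct HEk as [a [b [[l0 [Hl0 [Ha Hb]]] [HE1 HE2]]]].
  pose proof (pos_INR k) as Hkp.
  destruct HE as [[l [Hl [H1 H2]]] | [e1 [e2 [[[l1 [Hl1 [Hg1 He1]]] _] [[[l2 [Hl2 [Hg2 He2]]] _] [HE1' HE2']]]]]].
  - exists (Af m P1 P2 l), (Af m P1 P2 l), 0. split; [lra|].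
    exists 1%nat. intros n Hn. cbv zeta.
    replace ((k + 1) * n)%nat with (n + k * n)%nat by lia.
    split; [intros w; specialize (Hfst (Af m P1 P2 l) (Af m P1 P2 l) 0 n w); lia|].
    apply (coreA m P1 P2 Hp1 Hp2 Hs1 Hs2 Hm l l); auto; lra.
  - destruct (Rle_lt_dec (Af m P1 P2 l1) (Af m P1 P2 l2)) as [Hc|Hc].
    + exists (Af m P1 P2 l2), (Af m P1 P2 l1), (Af m P1 P2 l0). split; [lra|].
      exists (Nat.max 1 N0). intros n Hn. cbv zeta.
      replace ((k + 1) * n)%nat with (n + k * n)%nat by lia.
      split; [intros w; specialize (Hfst (Af m P1 P2 l2) (Af m P1 P2 l1) (Af m P1 P2 l0) n w); lia|].
      apply (coreB m P1 P2 Hp1 Hp2 Hs1 Hs2 Hm l1 l2 l0); auto; try lra.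
      * subst; nra.
      * subst; nra.
      * apply Hbig; lia.
      * lia.
    + exists (Af m P1 P2 l1), (Af m P1 P2 l1), 0. split; [lra|].
      exists 1%nat. intros n Hn. cbv zeta.
      replace ((k + 1) * n)%nat with (n + k * n)%nat by lia.
      split; [intros w; specialize (Hfst (Af m P1 P2 l1) (Af m P1 P2 l1) 0 n w); lia|].
      apply (coreA m P1 P2 Hp1 Hp2 Hs1 Hs2 Hm l1 l2); auto; lra.
Qed.
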